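(* Let $(X,d)$ be a complete metric space and let $T\colon X\to X$ satisfy (CM): for all $x,y\in X$, $x\neq y$ implies $d(Tx,Ty)<\frac{1}{2}\{d(x,Tx)+d(y,Ty)\}$. Then the following are equivalent: (i) for every $x\in X$ and every $\varepsilon>0$ there exists $\delta>0$ such that for all $i,j\in\mathbb{N}\cup\{0\}$, $\frac{1}{2}\{d(T^ix,T^{i+1}x)+d(T^jx,T^{j+1}x)\}<\varepsilon+\delta$ implies $d(T^{i+1}x,T^{j+1}x)\le\varepsilon$; (ii) $T$ has a unique fixed point $z\in X$ and the sequence $(T^nx)_{n}$ converges to $z$ for every $x\in X$.
   Context: $T^n$ denotes the $n$-fold composition of $T$, with $T^0$ the identity; $\mathbb{N}=\{1,2,3,\dots\}$. *)

(* Defs.v *)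
From Stdlib Require Import Reals.
Open Scope R_scope.

Definition is_metric {X : Type} (d : X -> X -> R) : Prop :=
  (forall x y, 0 <= d x y) /\
  (forall x y, d x y = 0 <-> x = y) /\
  (forall x y, d x y = d y x) /\
  (forall x y z, d x z <= d x y + d y z).

Definition seq_cv {X : Type} (d : X -> X -> R) (u : nat -> X) (l : X) : Prop :=
  forall eps, 0 < eps -> exists N : nat, forall n, (N <= n)%nat -> d (u n) l < eps.

Definition cauchy_seq {X : Type} (d : X -> X -> R) (u : nat -> X) : Prop :=
  forall eps, 0 < eps -> exists N : nat, forall m n,
    (N <= m)%nat -> (N <= n)%nat -> d (u m) (u n) < eps.

Definition complete_metric {X : Type} (d : X -> X -> R) : Prop :=
  forall u : nat -> X, cauchy_seq d u -> exists l, seq_cv d u l.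

Definition iterate {X : Type} (T : X -> X) (n : nat) (x : X) : X := Nat.iter n T x.

(* Main.v *)
Require Import Defs.
From Stdlib Require Import Reals Lra Lia Classical Arith.
Open Scope R_scope.

Lemma fin_min (P : R -> nat -> Prop) :
  (forall d d' k, 0 < d' -> d' <= d -> P d k -> P d' k) ->
  forall M, (forall k, (k < M)%nat -> exists d, 0 < d /\ P d k) ->
  exists d, 0 < d /\ forall k, (k < M)%nat -> P d k.
Proof.
  intros Hmono M; induction M as [|M IH]; intros H.
  - exists 1; split; [lra| intros k Hk; lia].
  - destruct IH as [d1 [Hd1 H1]]. { intros k Hk; apply H; lia. }
    destruct (H M) as [d2 [Hd2 H2]]; [lia|].
    exists (Rmin d1 d2); split. { apply Rmin_glb_lt; auto. }
    intros k Hk. destruct (Nat.eq_dec k M) as [->|Hne].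
    + apply (Hmono d2); auto. apply Rmin_glb_lt; auto. apply Rmin_r.
    + apply (Hmono d1); [apply Rmin_glb_lt; auto | apply Rmin_l | apply H1; lia].
Qed.

Lemma core (a b : nat -> R) eps :
  0 < eps ->
  (forall n, 0 <= b n) -> (forall n, b n <= /2 * a n) ->
  (forall n, 0 < b n -> b n < /2 * a n) ->
  (forall g, 0 < g -> exists M, forall n, (M <= n)%nat -> b n < g) ->
  (forall g, 0 < g -> exists M, forall n, (M <= n)%nat -> a n < g) ->
  exists delta, 0 < delta /\ forall i j, /2 * (a i + a j) < eps + delta -> b i + b j <= eps.
Proof.
  intros He Hb0 Hba Hbs Hbc Hac.
  assert (Ha0: forall n, 0 <= a n). { intro n; specialize (Hb0 n); specialize (Hba n); lra. }
  set (Q := fun delta i => forall j, /2 * (a i + a j) < eps + delta -> b i + b j <= eps).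
  assert (Hmono : forall dd dd' k, 0 < dd' -> dd' <= dd -> Q dd k -> Q dd' k).
  { unfold Q; intros dd dd' k _ Hle H j Hj. apply H; lra. }
  assert (Hone : forall i, exists delta, 0 < delta /\ Q delta i).
  { intro i. destruct (Rlt_or_le (b i) eps) as [Hlt|Hge].
    - destruct (Hbc (eps - b i)) as [M HM]; [lra|].
      destruct (fin_min (fun dd j => /2 * (a i + a j) < eps + dd -> b i + b j <= eps)) with (M := M) as [dl [Hdl Hall]].
      + intros dd dd' k _ Hle H Hk. apply H; lra.
      + intros j _. destruct (Rle_or_lt (b i + b j) eps) as [Hok|Hbad].
        * exists 1; split; [lra| intros; auto].
        * exists (/2*(a i + a j) - eps). split.
          { pose proof (Hba i); pose proof (Hba j); lra. }
          intros Hc; lra.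
      + exists dl; split; auto. intros j Hj.
        destruct (le_lt_dec M j) as [HMj|HjM].
        * pose proof (HM j HMj); lra.
        * apply Hall; auto.
    - assert (Hbpos: 0 < b i) by lra.
      pose proof (Hbs i Hbpos).
      exists (/2 * a i - eps); split; [lra|].
      intros j Hj. pose proof (Ha0 j). lra.
  }
  destruct (Hac eps He) as [N0 HN0].
  destruct (fin_min Q Hmono N0) as [dl [Hdl Hall]].
  { intros k _. apply Hone. }
  exists dl; split; auto.
  intros i j Hij.
  destruct (lt_dec i N0) as [Hi|Hi].
  - apply (Hall i Hi); auto.
  - destruct (lt_dec j N0) as [Hj|Hj].
    + rewrite Rplus_comm. apply (Hall j Hj). rewrite Rplus_comm; auto.
    + pose proof (HN0 i ltac:(lia)); pose proof (HN0 j ltac:(lia)).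
      pose proof (Hba i); pose proof (Hba j). lra.
Qed.

Section S.
Variables (X : Type) (d : X -> X -> R) (T : X -> X).
Hypothesis Hmetric : is_metric d.
Hypothesis HCM : forall x y : X, x <> y ->
     d (T x) (T y) < / 2 * (d x (T x) + d y (T y)).

Lemma a_noninc y : d (T y) (T (T y)) <= d y (T y).
Proof.
  destruct Hmetric as [Hpos [Hzero [Hsym Htri]]].
  destruct (classic (y = T y)) as [E|E].
  - assert (E2: T (T y) = T y) by (f_equal; symmetry; exact E).
    rewrite E2, (proj2 (Hzero (T y) (T y)) eq_refl). apply Hpos.
  - pose proof (HCM y (T y) E). lra.
Qed.

Lemma a_strict y : 0 < d y (T y) -> d (T y) (T (T y)) < d y (T y).
Proof.
  destruct Hmetric as [Hpos [Hzero [Hsym Htri]]].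
  intro Hp. destruct (classic (y = T y)) as [E|E].
  - rewrite <- E in Hp. rewrite (proj2 (Hzero y y) eq_refl) in Hp. lra.
  - pose proof (HCM y (T y) E). lra.
Qed.

Hypothesis Hcomplete : complete_metric d.
Hypothesis Hi : forall (x : X) (eps : R), 0 < eps -> exists delta : R, 0 < delta /\
     forall i j : nat,
       / 2 * (d (iterate T i x) (iterate T (S i) x)
              + d (iterate T j x) (iterate T (S j) x)) < eps + delta ->
       d (iterate T (S i) x) (iterate T (S j) x) <= eps.

Lemma a_to_0 x : forall g, 0 < g -> exists N, forall n, (N <= n)%nat ->
   d (iterate T n x) (iterate T (S n) x) < g.
Proof.
  destruct Hmetric as [Hpos [Hzero [Hsym Htri]]].
  set (a := fun n => d (iterate T n x) (iterate T (S n) x)).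
  assert (Hdec : Un_decreasing a).
  { intro n. unfold a. simpl. apply a_noninc. }
  assert (Hlb : has_lb a).
  { exists 0. intros y [i ->]. unfold opp_seq. pose proof (Hpos (iterate T i x) (iterate T (S i) x)).
    unfold a. lra. }
  destruct (decreasing_cv a Hdec Hlb) as [l Hl].
  assert (Hge : forall n, l <= a n).
  { intro n. destruct (Rle_or_lt l (a n)) as [H|H]; auto.
    destruct (Hl (l - a n)) as [N HN]; [lra|].
    specialize (HN (max N n) ltac:(lia)).
    pose proof (decreasing_prop a n (max N n) Hdec ltac:(lia)).
    unfold Rdist in HN. apply Rabs_def2 in HN. lra. }
  assert (Hl0 : 0 <= l).
  { destruct (Rle_or_lt 0 l) as [H|H]; auto.
    destruct (Hl (- l)) as [N HN]; [lra|]. specialize (HN N ltac:(lia)).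
    unfold Rdist in HN. apply Rabs_def2 in HN.
    pose proof (Hpos (iterate T N x) (iterate T (S N) x)). unfold a in HN. lra. }
  destruct (Req_dec l 0) as [Z|NZ].
  - intros g Hg. destruct (Hl g Hg) as [N HN]. exists N. intros n Hn.
    specialize (HN n Hn). unfold Rdist in HN. rewrite Z in HN. apply Rabs_def2 in HN.
    unfold a in HN. lra.
  - exfalso. assert (Hlp : 0 < l) by lra.
    destruct (Hi x l Hlp) as [delta [Hd H]].
    destruct (Hl delta Hd) as [N HN]. specialize (HN N ltac:(lia)).
    unfold Rdist in HN. apply Rabs_def2 in HN.
    assert (HS : a (S N) <= a N) by apply Hdec.
    specialize (H N (S N)). fold (a N) in H. fold (a (S N)) in H.
    assert (Hle : a (S N) <= l).
    { exact (H ltac:(lra)). }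
    assert (Hst : a (S (S N)) < a (S N)).
    { unfold a. simpl. apply a_strict. pose proof (Hge (S N)). unfold a in H0. simpl in H0. lra. }
    pose proof (Hge (S (S N))). lra.
Qed.

Lemma fixed_from x : exists l, T l = l /\ seq_cv d (fun n => iterate T n x) l.
Proof.
  destruct Hmetric as [Hpos [Hzero [Hsym Htri]]].
  assert (Hc : cauchy_seq d (fun n => iterate T n x)).
  { intros g Hg. destruct (Hi x (g/2)) as [delta [Hd H]]; [lra|].
    destruct (a_to_0 x (g/2)) as [N HN]; [lra|].
    exists (S N). intros m n Hm Hn.
    destruct m as [|i]; [lia|]. destruct n as [|j]; [lia|].
    assert (d (iterate T (S i) x) (iterate T (S j) x) <= g/2).
    { apply H. pose proof (HN i ltac:(lia)). pose proof (HN j ltac:(lia)). lra. }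
    lra. }
  destruct (Hcomplete _ Hc) as [l Hl].
  exists l. split; auto.
  set (c := d l (T l)).
  assert (Hstep : forall n, c <= d l (iterate T (S n) x) + /2 * (d (iterate T n x) (iterate T (S n) x) + c)).
  { intro n. pose proof (Htri l (iterate T (S n) x) (T l)).
    assert (d (iterate T (S n) x) (T l) <= /2 * (d (iterate T n x) (iterate T (S n) x) + c)).
    { simpl. destruct (classic (iterate T n x = l)) as [E|E].
      - rewrite E. rewrite (proj2 (Hzero (T l) (T l)) eq_refl).
        pose proof (Hpos l (T l)). pose proof (Hpos (T l) (T l)). unfold c. lra.
      - pose proof (HCM _ _ E). unfold c. simpl. lra. }
    fold c in H. lra. }
  assert (Hc0 : c <= 0).
  { destruct (Rle_or_lt c 0) as [H|H]; auto. exfalso.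
    destruct (a_to_0 x (c/4)) as [N1 HN1]; [lra|].
    destruct (Hl (c/4)) as [N2 HN2]; [lra|].
    specialize (HN1 (max N1 N2) ltac:(lia)).
    specialize (HN2 (S (max N1 N2)) ltac:(lia)). simpl in HN2.
    specialize (Hstep (max N1 N2)). rewrite (Hsym l) in Hstep. simpl in Hstep. simpl in HN1. lra. }
  symmetry. apply Hzero. pose proof (Hpos l (T l)). unfold c in Hc0. lra.
Qed.
End S.

Theorem theorem3p1 (X : Type) (d : X -> X -> R) (T : X -> X)
  (Hne : inhabited X) (Hmetric : is_metric d) (Hcomplete : complete_metric d)
  (HCM : forall x y : X, x <> y ->
     d (T x) (T y) < / 2 * (d x (T x) + d y (T y))) :
  (forall (x : X) (eps : R), 0 < eps -> exists delta : R, 0 < delta /\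
     forall i j : nat,
       / 2 * (d (iterate T i x) (iterate T (S i) x)
              + d (iterate T j x) (iterate T (S j) x)) < eps + delta ->
       d (iterate T (S i) x) (iterate T (S j) x) <= eps)
  <->
  (exists z : X, T z = z /\ (forall w : X, T w = w -> w = z) /\
     forall x : X, seq_cv d (fun n => iterate T n x) z).
Proof.
  pose proof Hmetric as [Hpos [Hzero [Hsym Htri]]].
  assert (Huniq : forall w z, T w = w -> T z = z -> w = z).
  { intros w z Hw Hz. destruct (classic (w = z)) as [E|E]; auto.
    pose proof (HCM w z E). rewrite Hw, Hz in H.
    rewrite (proj2 (Hzero w w) eq_refl), (proj2 (Hzero z z) eq_refl) in H.
    pose proof (Hpos w z). lra. }
  split.
  - intro Hi. destruct Hne as [x0].
    destruct (fixed_from X d T Hmetric HCM Hcomplete Hi x0) as [z [Hz _]].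
    exists z. split; [auto|split].
    + intros w Hw. apply Huniq; auto.
    + intro x. destruct (fixed_from X d T Hmetric HCM Hcomplete Hi x) as [l [Hl Hcv]].
      rewrite <- (Huniq l z Hl Hz). exact Hcv.
  - intros [z [Hz [_ Hcv]]] x eps Heps.
    destruct (core (fun n => d (iterate T n x) (iterate T (S n) x))
                   (fun n => d (iterate T (S n) x) z) eps Heps) as [delta [Hd H]].
    + intro n. apply Hpos.
    + intro n. simpl. destruct (classic (iterate T n x = z)) as [E|E].
      * rewrite E, Hz, (proj2 (Hzero z z) eq_refl). lra.
      * pose proof (HCM _ _ E). rewrite Hz, (proj2 (Hzero z z) eq_refl) in H. lra.
    + intros n Hn. simpl in *. destruct (classic (iterate T n x = z)) as [E|E].
      * rewrite E, Hz, (proj2 (Hzero z z) eq_refl) in Hn. lra.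
      * pose proof (HCM _ _ E). rewrite Hz, (proj2 (Hzero z z) eq_refl) in H. lra.
    + intros g Hg. destruct (Hcv x g Hg) as [N HN]. exists N. intros n Hn.
      apply HN. lia.
    + intros g Hg. destruct (Hcv x (g/2)) as [N HN]; [lra|]. exists N. intros n Hn.
      pose proof (HN n Hn). pose proof (HN (S n) ltac:(lia)).
      pose proof (Htri (iterate T n x) z (iterate T (S n) x)).
      rewrite (Hsym z) in H1. simpl in *. lra.
    + exists delta. split; auto. intros i j Hij.
      specialize (H i j Hij). cbv beta in H.
      pose proof (Htri (iterate T (S i) x) z (iterate T (S j) x)).
      rewrite (Hsym z) in H0. lra.
Qed.
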